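(* Let $p>q>0$ be coprime integers and represent the lens space $L_{p,q}$ as the union of two solid tori glued along their common boundary torus $T$. Fix any basis of $\pi_1(T)=H_1(T;\mathbb Z)=\mathbb Z^2$, and let $r_1,r_2\in\mathbb Q\cup\{\infty\}$ be the slopes of the meridians $\mu_1,\mu_2$ of the two solid tori. Then $d_c(r_1,r_2)=E(p,q)-1$.
   Context: The slope of a primitive class $(m,n)\in\mathbb Z^2$ is $m/n\in\mathbb Q\cup\{\infty\}$. Hyperbolic plane is the upper half-plane with absolute $\mathbb R\cup\{\infty\}$; the Farey tesselation consists of the geodesics joining $m/n$ and $m'/n'$ ($\infty=1/0$) with $|mn'-nm'|=1$. For distinct rational (or infinite) absolute points $r_1,r_2$, $d_c(r_1,r_2)$ is the number of Farey lines intersecting the geodesic from $r_1$ to $r_2$ (lines merely sharing an ideal endpoint do not count). For coprime positive integers $p,q$, $E(p,q)$ is the number of subtractions in the subtractive Euclid algorithm converting $(p,q)$ into $(0,1)$, i.e. the sum of the partial quotients of the continued fraction of $p/q$. *)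

(* Defs.v *)
From mathcomp Require Import all_boot all_order all_algebra.
Set Implicit Arguments. Unset Strict Implicit. Unset Printing Implicit Defensive.
Import Order.TTheory GRing.Theory Num.Theory.
Local Open Scope ring_scope.

(* Points of the absolute R ∪ {∞} that we need: Q ∪ {∞}, encoded as
   [Some x] for x : rat and [None] for ∞. *)
Notation extQ := (option rat).

Definition slope (m n : int) : extQ :=
  if n == 0 then None else Some ((m%:~R : rat) / n%:~R).

(* the order of Q ∪ {∞} seen as the real line with ∞ on top;
   cutting the circle R ∪ {∞} at ∞ *)
Definition ext_lt (x y : extQ) : bool :=
  match x, y with
  | Some a, Some b => a < b
  | Some _, None => true
  | None, _ => false
  end.

(* Farey adjacency |m n' - n m'| = 1 for reduced fractions m/n, m'/n'
   (∞ = 1/0). *)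
Definition farey_adj (x y : extQ) : bool :=
  match x, y with
  | Some a, Some b => `|numq a * denq b - denq a * numq b| == 1
  | Some a, None => `|denq a| == 1
  | None, Some b => `|denq b| == 1
  | None, None => false
  end.

(* A Farey line, represented by its endpoints (x,y) with x < y. *)
Definition farey_line (e : extQ * extQ) : bool :=
  ext_lt e.1 e.2 && farey_adj e.1 e.2.

(* The geodesic with endpoints lo < hi and the geodesic with endpoints x < y
   intersect (in the interior of the hyperbolic plane) iff the endpoints
   strictly interleave on the circle R ∪ {∞}; sharing an endpoint does
   not count. *)
Definition interleave (lo hi x y : extQ) : bool :=
  (ext_lt lo x && ext_lt x hi && ext_lt hi y)
  || (ext_lt x lo && ext_lt lo y && ext_lt y hi).

Definition crosses (r1 r2 : extQ) (e : extQ * extQ) : bool :=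
  let lo := if ext_lt r1 r2 then r1 else r2 in
  let hi := if ext_lt r1 r2 then r2 else r1 in
  farey_line e && interleave lo hi e.1 e.2.

Definition dc_eq (r1 r2 : extQ) (n : nat) : Prop :=
  exists s : seq (extQ * extQ),
    [/\ uniq s, (forall e, crosses r1 r2 e = (e \in s)) & size s = n].

(* Subtractive Euclid algorithm: number of subtractions turning (p,q)
   into (0,1); [fuel] is a termination bound. *)
Fixpoint Esub (fuel p q : nat) : nat :=
  match fuel with
  | 0 => 0
  | f.+1 =>
    if p == 0%N then 0
    else if (q <= p)%N then (Esub f (p - q) q).+1
    else (Esub f p (q - p)).+1
  end.

Definition E (p q : nat) : nat := Esub (p + q) p q.

(* Main.v *)
Require Import Defs.
From mathcomp Require Import all_boot all_order all_algebra.
From mathcomp Require Import zify ring lra.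
Import Order.TTheory GRing.Theory Num.Theory.
Local Open Scope ring_scope.

Definition det (z t : int * int) : int := z.1 * t.2 - z.2 * t.1.
Definition vec (x : extQ) : int * int :=
  match x with Some a => (numq a, denq a) | None => (1, 0) end.
Definition Dx (x y : extQ) : int := det (vec x) (vec y).
Definition slp (z : int * int) : extQ := slope z.1 z.2.
Definition fq (x : extQ) : rat :=
  match x with Some a => a / (1 + `|a|) | None => 1 end.

Lemma ltq (a b : rat) : (a < b) = (numq a * denq b < numq b * denq a).
Proof. by rewrite -lt_ratE. Qed.

Lemma ext_lt_D x y : ext_lt x y = (Dx x y < 0).
Proof.
case: x => [a|]; case: y => [b|] //=; rewrite /Dx /det /=.
- by rewrite ltq subr_lt0 [denq a * _]mulrC.
- by have := denq_gt0 a; lia.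
- by have := denq_gt0 b; lia.
Qed.

Lemma farey_D x y : farey_adj x y = (`|Dx x y| == 1).
Proof.
case: x => [a|]; case: y => [b|] //=; rewrite /Dx /det /=.
- by congr (_ == 1); lia.
- by congr (_ == 1); lia.
Qed.

Lemma DxC x y : Dx y x = - Dx x y.
Proof. rewrite /Dx /det; ring. Qed.

Lemma Dxx x : Dx x x = 0.
Proof. rewrite /Dx /det; ring. Qed.

Lemma ext_trich x y : [\/ ext_lt x y, x = y | ext_lt y x].
Proof.
case: x => [a|]; case: y => [b|] /=; try by constructor.
by case: (ltgtP a b) => h; [constructor 1 | constructor 3 | constructor 2; rewrite h].
Qed.

Lemma Dx_eq0 x y : (Dx x y == 0) = (x == y).
Proof.
case: (ext_trich x y) => [h|->|h].
- have hx := h; rewrite ext_lt_D in h; rewrite (lt_eqF h).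
  by apply/esym/eqP => e; move: hx; rewrite e ext_lt_D Dxx ltxx.
- by rewrite Dxx !eqxx.
- have hx := h; rewrite ext_lt_D DxC oppr_lt0 in h; rewrite (gt_eqF h).
  by apply/esym/eqP => e; move: hx; rewrite e ext_lt_D Dxx ltxx.
Qed.

Lemma fq_mono (a b : rat) : (a < b) = (a / (1 + `|a|) < b / (1 + `|b|)).
Proof.
have pa : 0 < 1 + `|a| by rewrite ltr_wpDr.
have pb : 0 < 1 + `|b| by rewrite ltr_wpDr.
rewrite ltr_pdivrMr // mulrAC ltr_pdivlMr //.
case: (lerP 0 a) => ha; case: (lerP 0 b) => hb;
  rewrite ?(ger0_norm ha) ?(ger0_norm hb) ?(ltr0_norm ha) ?(ltr0_norm hb).
- apply/idP/idP => h; nra.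
- apply/idP/idP => h; nra.
- apply/idP/idP => h; nra.
- apply/idP/idP => h; nra.
Qed.

Lemma fq_lt1 (a : rat) : a / (1 + `|a|) < 1.
Proof.
have pa : 0 < 1 + `|a| by rewrite ltr_wpDr.
rewrite ltr_pdivrMr // mul1r.
case: (lerP 0 a) => ha; rewrite ?(ger0_norm ha) ?(ltr0_norm ha); lra.
Qed.

Lemma ext_lt_f x y : ext_lt x y = (fq x < fq y).
Proof.
case: x => [a|]; case: y => [b|] //=.
- by rewrite -fq_mono.
- by rewrite fq_lt1.
- by rewrite ltNge ltW // fq_lt1.
Qed.

Lemma slope_vec x : slp (vec x) = x.
Proof.
case: x => [a|] //=; rewrite /slp /slope /=.
by rewrite (negbTE (denq_neq0 a)) divq_num_den.
Qed.

Lemma unit_int (x y : int) : x * y = 1 -> x = 1 \/ x = -1.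
Proof. move=> h. have: x \is a intUnitRing.unitz by apply: (@intUnitRing.unitzPl x y); rewrite mulrC.
rewrite qualifE /=. lia. Qed.

Definition negv (z : int * int) : int * int := (- z.1, - z.2).

Lemma vec_slp z t : det z t = 1 -> vec (slp z) = z \/ vec (slp z) = negv z.
Proof.
case: z => z1 z2; rewrite /det /slp /slope /= => h.
case: eqP => [e|ne].
- subst z2; move: h; rewrite mul0r subr0 => /unit_int [] ->; [left|right] => //.
- have cp : coprime `|z1| `|z2|.
    have : coprimez z1 z2 by apply/coprimezP; exists (t.2, - t.1) => /=; rewrite -h; ring.
    by rewrite coprimezE.
  rewrite /= coprimeq_num // coprimeq_den // (negbTE (introN eqP ne)).
  case: (ltrgt0P z2) => hz; last by move: ne; rewrite hz.
  + by left; rewrite gtr0_sg // mul1r.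
  + by right; rewrite ltr0_sg // mulN1r.
Qed.

Lemma slpN z : slp (negv z) = slp z.
Proof.
case: z => z1 z2; rewrite /slp /slope /= oppr_eq0.
case: eqP => // _; congr Some; rewrite !rmorphN /= invrN mulrN mulNr opprK //.
Qed.
Lemma sgz_sub (a b : rat) : sgz (a - b) = if a < b then -1 else if b < a then 1 else 0.
Proof.
case: (ltgtP a b) => h.
- by rewrite ltr0_sgz // subr_lt0.
- by rewrite gtr0_sgz // subr_gt0.
- by rewrite h subrr sgz0.
Qed.

Lemma inter_rat (L H X Y : rat) : X < Y -> L <= H ->
  ((L < X) && (X < H) && (H < Y) || (X < L) && (L < Y) && (Y < H)) =
  (sgz (L - X) * sgz (H - Y) * sgz (L - Y) * sgz (H - X) < 0).
Proof.
move=> hXY hLH; rewrite !sgz_sub.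
case: (ltgtP L X) => h1; case: (ltgtP H Y) => h2; case: (ltgtP L Y) => h3;
  case: (ltgtP H X) => h4 => //=; exfalso; lra.
Qed.

Lemma sgz_Dx a b : sgz (Dx a b) = sgz (fq a - fq b).
Proof.
case: (ext_trich a b) => [h|->|h].
- rewrite ltr0_sgz; last by rewrite -ext_lt_D.
  by rewrite ltr0_sgz // subr_lt0 -ext_lt_f.
- by rewrite Dxx subrr !sgz0.
- rewrite gtr0_sgz; last by rewrite DxC oppr_gt0 -ext_lt_D.
  by rewrite gtr0_sgz // subr_gt0 -ext_lt_f.
Qed.

Lemma crossesE r1 r2 x y : crosses r1 r2 (x, y) =
  (Dx x y == -1) && (Dx r1 x * Dx r2 y * Dx r1 y * Dx r2 x < 0).
Proof.
rewrite /crosses /farey_line /= ext_lt_D farey_D.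
have -> : (Dx x y < 0) && (`|Dx x y| == 1) = (Dx x y == -1).
  by apply/idP/idP; lia.
case: eqP => hxy //=.
have lxy : fq x < fq y by rewrite -ext_lt_f ext_lt_D hxy.
rewrite -sgz_lt0 !sgzM !sgz_Dx /interleave !ext_lt_f.
case h12: (fq r1 < fq r2) => /=.
- by rewrite inter_rat // ltW.
- rewrite inter_rat //; last by rewrite leNgt h12.
  congr (_ < 0); ring.
Qed.
Definition root : (int * int) * (int * int) := ((0, 1), (1, 0)).
Definition mapL (e : (int * int) * (int * int)) :=
  ((e.1.1, e.1.2 + e.1.1), (e.2.1, e.2.2 + e.2.1)).
Definition mapR (e : (int * int) * (int * int)) :=
  ((e.1.1 + e.1.2, e.1.2), (e.2.1 + e.2.2, e.2.2)).
Definition unL (e : (int * int) * (int * int)) :=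
  ((e.1.1, e.1.2 - e.1.1), (e.2.1, e.2.2 - e.2.1)).
Definition unR (e : (int * int) * (int * int)) :=
  ((e.1.1 - e.1.2, e.1.2), (e.2.1 - e.2.2, e.2.2)).

Lemma mapLK : cancel mapL unL.
Proof. by case=> [[? ?] [? ?]]; rewrite /mapL /unL /=; congr (_, _); congr (_, _); ring. Qed.
Lemma unLK : cancel unL mapL.
Proof. by case=> [[? ?] [? ?]]; rewrite /mapL /unL /=; congr (_, _); congr (_, _); ring. Qed.
Lemma mapRK : cancel mapR unR.
Proof. by case=> [[? ?] [? ?]]; rewrite /mapR /unR /=; congr (_, _); congr (_, _); ring. Qed.
Lemma unRK : cancel unR mapR.
Proof. by case=> [[? ?] [? ?]]; rewrite /mapR /unR /=; congr (_, _); congr (_, _); ring. Qed.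

Fixpoint Lst (f P Q : nat) : seq ((int * int) * (int * int)) :=
  match f with
  | 0 => [::]
  | f.+1 =>
    if P == 0%N then [::]
    else if (Q <= P)%N then root :: map mapL (Lst f (P - Q) Q)
    else root :: map mapR (Lst f P (Q - P))
  end.

Lemma size_Lst f P Q : size (Lst f P Q) = Esub f P Q.
Proof.
elim: f P Q => [|f IH] P Q //=.
by case: eqP => // _; case: ifP => _ /=; rewrite size_map IH.
Qed.

Definition Hpred (w : int * int) (e : (int * int) * (int * int)) : bool :=
  [&& 0 <= e.1.1, 0 <= e.1.2, 0 <= e.2.1, 0 <= e.2.2,
      det e.1 e.2 == -1, 1 <= det e.2 w & 1 <= det w e.1].

Lemma keyL (u1 u2 v1 v2 Q P : int) : 0 <= u1 -> 0 <= u2 -> 0 <= v1 -> 0 <= v2 ->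
  u1 * v2 - u2 * v1 = -1 -> 1 <= v1 * P - v2 * Q -> 1 <= Q * u2 - P * u1 -> Q <= P ->
  (u1 = 0 /\ u2 = 1 /\ v1 = 1 /\ v2 = 0) \/ (u1 <= u2 /\ v1 <= v2).
Proof.
move=> h1 h2 h3 h4 hd hm hn hQP.
set m := v1 * P - v2 * Q in hm; set n := Q * u2 - P * u1 in hn.
have eQ : Q = m * u1 + n * v1.
  have : Q * (u1 * v2 - u2 * v1) = - (m * u1 + n * v1) by rewrite /m /n; ring.
  by rewrite hd; lia.
have eP : P = m * u2 + n * v2.
  have : P * (u1 * v2 - u2 * v1) = - (m * u2 + n * v2) by rewrite /m /n; ring.
  by rewrite hd; lia.
case: (lerP v1 v2) => hv.
- right; split => //.
  case: (lerP u1 u2) => hu //.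
  have : u1 * v2 >= (u2 + 1) * v2 by apply: ler_wpM2r => //; lia.
  have : u2 * v1 <= u2 * v2 by apply: ler_wpM2l.
  lia.
- case: (lerP u2 u1) => hu.
  + have : m * u2 <= m * u1 by apply: ler_wpM2l => //; lia.
    have : n * v2 < n * v1 by nia.
    lia.
  + left.
    have : u1 * v2 <= (u2 - 1) * v2 by apply: ler_wpM2r => //; lia.
    have : u2 * (v2 + 1) <= u2 * v1 by apply: ler_wpM2l => //; lia.
    move=> A B.
    have hu2 : u2 = 1 by nia.
    subst u2; have hv2 : v2 = 0 by nia.
    subst v2; lia.
Qed.

Lemma keyR (u1 u2 v1 v2 Q P : int) : 0 <= u1 -> 0 <= u2 -> 0 <= v1 -> 0 <= v2 ->
  u1 * v2 - u2 * v1 = -1 -> 1 <= v1 * P - v2 * Q -> 1 <= Q * u2 - P * u1 -> P <= Q ->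
  (u1 = 0 /\ u2 = 1 /\ v1 = 1 /\ v2 = 0) \/ (u2 <= u1 /\ v2 <= v1).
Proof.
move=> h1 h2 h3 h4 hd hm hn hQP.
have := @keyL v2 v1 u2 u1 P Q h4 h3 h2 h1.
have -> : v2 * u1 - v1 * u2 = u1 * v2 - u2 * v1 by ring.
have -> : u2 * Q - u1 * P = Q * u2 - P * u1 by ring.
have -> : P * v1 - Q * v2 = v1 * P - v2 * Q by ring.
move=> /(_ hd hn hm hQP); lia.
Qed.

Lemma Hpred0 Q e : Hpred (Q%:Z, 0) e = false.
Proof.
case: e => [[u1 u2] [v1 v2]]; rewrite /Hpred /det /=.
apply/negbTE; apply/negP => /and5P [_ _ _ h4 /and3P [_ h _]]; nia.
Qed.

Lemma mem_Lst f P Q : (0 < Q)%N -> (P + Q <= f)%N ->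
  forall e, (e \in Lst f P Q) = Hpred (Q%:Z, P%:Z) e.
Proof.
elim: f P Q => [|f IH] P Q hQ hf e; first by lia.
rewrite /=; case: eqP => [->|hP]; first by rewrite Hpred0.
case: ifP => hQP; rewrite in_cons.
- have -> : (e \in map mapL (Lst f (P - Q) Q)) = (unL e \in Lst f (P - Q) Q).
    by rewrite -{1}(unLK e) (mem_map (can_inj mapLK)).
  rewrite IH; [|lia|lia].
  case: e => [[u1 u2] [v1 v2]]; rewrite /Hpred /unL /det /root /=.
  rewrite !xpair_eqE.
  apply/idP/idP.
  + case/orP.
    * by case/andP=> /andP [/eqP-> /eqP->] /andP [/eqP-> /eqP->]; rewrite /=; lia.
    * move=> /and5P [h1 h2 h3 h4 /and3P [hd hm hn]].
      apply/and5P; split; try lia; apply/and3P; split; nia.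
  + move=> /and5P [h1 h2 h3 h4 /and3P [hd hm hn]].
    have hQP' : Q%:Z <= P%:Z by lia.
    case: (keyL _ _ _ _ _ _ h1 h2 h3 h4 (eqP hd) hm hn hQP') => [[-> [-> [-> ->]]] | [hu hv]].
      by rewrite !eqxx.
    apply/orP; right.
    apply/and5P; split; try lia; apply/and3P; split; nia.
- have -> : (e \in map mapR (Lst f P (Q - P))) = (unR e \in Lst f P (Q - P)).
    by rewrite -{1}(unRK e) (mem_map (can_inj mapRK)).
  rewrite IH; [|lia|lia].
  case: e => [[u1 u2] [v1 v2]]; rewrite /Hpred /unR /det /root /=.
  rewrite !xpair_eqE.
  apply/idP/idP.
  + case/orP.
    * by case/andP=> /andP [/eqP-> /eqP->] /andP [/eqP-> /eqP->]; rewrite /=; lia.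
    * move=> /and5P [h1 h2 h3 h4 /and3P [hd hm hn]].
      apply/and5P; split; try lia; apply/and3P; split; nia.
  + move=> /and5P [h1 h2 h3 h4 /and3P [hd hm hn]].
    have hQP' : P%:Z <= Q%:Z by lia.
    case: (keyR _ _ _ _ _ _ h1 h2 h3 h4 (eqP hd) hm hn hQP') => [[-> [-> [-> ->]]] | [hu hv]].
      by rewrite !eqxx.
    apply/orP; right.
    apply/and5P; split; try lia; apply/and3P; split; nia.
Qed.

Lemma uniq_Lst f P Q : (0 < Q)%N -> (P + Q <= f)%N -> uniq (Lst f P Q).
Proof.
elim: f P Q => [|f IH] P Q hQ hf //=.
case: eqP => // hP; case: ifP => hQP /=.
- rewrite (map_inj_uniq (can_inj mapLK)) IH; [|lia|lia].
  rewrite -{1}(unLK root) (mem_map (can_inj mapLK)) mem_Lst; [|lia|lia].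
  by [].
- rewrite (map_inj_uniq (can_inj mapRK)) IH; [|lia|lia].
  rewrite -{1}(unRK root) (mem_map (can_inj mapRK)) mem_Lst; [|lia|lia].
  by [].
Qed.

Definition Npred (w : int * int) (e : (int * int) * (int * int)) : bool :=
  [&& 1 <= e.1.2, 1 <= e.2.2, det e.1 e.2 == -1, 1 <= det e.2 w & 1 <= det w e.1].

Lemma NpredE (Q P : int) e : 0 < Q -> Q < P ->
  Npred (Q, P) e = Hpred (Q, P) e && (e != root).
Proof.
move=> hQ hQP.
case: e => [[u1 u2] [v1 v2]]; rewrite /Npred /Hpred /det /root /= !xpair_eqE.
apply/idP/idP.
- move=> /and5P [h2 h4 /eqP hd hm hn].
  have hv1 : 1 <= v1 by nia.
  have hu1 : 0 <= u1 by nia.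
  apply/andP; split; last by lia.
  apply/and5P; split; try lia; apply/and3P; split; try lia; apply/eqP; lia.
- move=> /andP [/and5P [h1 h2 h3 h4 /and3P [/eqP hd hm hn]] hr].
  have hQP' : Q <= P by lia.
  case: (keyL _ _ _ _ _ _ h1 h2 h3 h4 hd hm hn hQP') => [[e1 [e2 [e3 e4]]] | [hu hv]].
    by move: hr; rewrite e1 e2 e3 e4.
  have hu2 : 1 <= u2.
    case: (lerP 1 u2) => // h; have e : u2 = 0 by lia.
    have e' : u1 = 0 by lia.
    by move: hd; rewrite e e'; lia.
  have hv2 : 1 <= v2.
    case: (lerP 1 v2) => // h; have e : v2 = 0 by lia.
    have e' : v1 = 0 by lia.
    by move: hd; rewrite e e'; lia.
  by apply/and5P; split => //; rewrite hd.
Qed.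

Lemma mem_behead_uniq (T : eqType) (x : T) t e : uniq (x :: t) ->
  (e \in t) = (e \in x :: t) && (e != x).
Proof.
move=> /= /andP [hx _]; rewrite in_cons.
case: (eqVneq e x) => [->|ne] /=; first by rewrite (negbTE hx).
by rewrite andbT.
Qed.

Definition prim (z : int * int) := exists t, det z t = 1 \/ det z t = -1.

Lemma det_negvr z t : det z (negv t) = - det z t.
Proof. rewrite /det /negv /=; ring. Qed.
Lemma det_negvl z t : det (negv z) t = - det z t.
Proof. rewrite /det /negv /=; ring. Qed.

Lemma vec_slp_s z : prim z ->
  exists s : int, (s = 1 \/ s = -1) /\ vec (slp z) = (s * z.1, s * z.2).
Proof.
case=> t ht.
have [t' ht'] : exists t', det z t' = 1.
  case: ht => h; first by exists t.
  by exists (negv t); rewrite det_negvr h opprK.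
case: (vec_slp _ _ ht') => ->; first by exists 1; split; [by left|]; case: z {ht ht'} => ? ? /=; rewrite !mul1r.
by exists (-1); split; [by right|]; rewrite !mulN1r.
Qed.

Lemma sq1 (s : int) : s = 1 \/ s = -1 -> s * s = 1.
Proof. by case=> ->. Qed.

Section M.
Variables (a b c d : int).
Hypothesis hdelta : a * d - b * c = 1 \/ a * d - b * c = -1.

Definition Mv (z : int * int) : int * int := (z.1 * a + z.2 * c, z.1 * b + z.2 * d).
Definition Minv (z : int * int) : int * int :=
  ((a * d - b * c) * (z.1 * d - z.2 * c), (a * d - b * c) * (z.2 * a - z.1 * b)).

Lemma dd1 : (a * d - b * c) * (a * d - b * c) = 1.
Proof. exact: sq1. Qed.

Lemma MMinv z : Mv (Minv z) = z.
Proof.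
case: z => z1 z2; rewrite /Mv /Minv /=.
have e1 : ((a * d - b * c) * (z1 * d - z2 * c) * a + (a * d - b * c) * (z2 * a - z1 * b) * c)
   = (a * d - b * c) * (a * d - b * c) * z1 by ring.
have e2 : ((a * d - b * c) * (z1 * d - z2 * c) * b + (a * d - b * c) * (z2 * a - z1 * b) * d)
   = (a * d - b * c) * (a * d - b * c) * z2 by ring.
by rewrite e1 e2 dd1 !mul1r.
Qed.

Lemma MinvM z : Minv (Mv z) = z.
Proof.
case: z => z1 z2; rewrite /Mv /Minv /=.
have e1 : (a * d - b * c) * ((z1 * a + z2 * c) * d - (z1 * b + z2 * d) * c)
   = (a * d - b * c) * (a * d - b * c) * z1 by ring.
have e2 : (a * d - b * c) * ((z1 * b + z2 * d) * a - (z1 * a + z2 * c) * b)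
   = (a * d - b * c) * (a * d - b * c) * z2 by ring.
by rewrite e1 e2 dd1 !mul1r.
Qed.

Lemma det_M z t : det (Mv z) (Mv t) = (a * d - b * c) * det z t.
Proof. rewrite /det /Mv /=; ring. Qed.

Lemma Mv_negv z : Mv (negv z) = negv (Mv z).
Proof. rewrite /Mv /negv /=; congr (_, _); ring. Qed.

Lemma prim_M z t : det z t = 1 \/ det z t = -1 -> prim (Mv z).
Proof.
move=> h; exists (Mv t); rewrite det_M.
by case: hdelta => ->; case: h => ->; rewrite ?mul1r ?mulN1r ?opprK; [left|right|right|left].
Qed.

Lemma DxM X Y sX sY zX zY :
  vec X = (sX * (Mv zX).1, sX * (Mv zX).2) ->
  vec Y = (sY * (Mv zY).1, sY * (Mv zY).2) ->
  Dx X Y = sX * sY * (a * d - b * c) * det zX zY.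
Proof. by rewrite /Dx => -> ->; rewrite /det /Mv /=; ring. Qed.

Lemma prod4 r1 r2 x y w s1 s2 sx sy zx zy :
  s1 = 1 \/ s1 = -1 -> s2 = 1 \/ s2 = -1 -> sx = 1 \/ sx = -1 -> sy = 1 \/ sy = -1 ->
  vec r1 = (s1 * (Mv (1, 0)).1, s1 * (Mv (1, 0)).2) ->
  vec r2 = (s2 * (Mv w).1, s2 * (Mv w).2) ->
  vec x = (sx * (Mv zx).1, sx * (Mv zx).2) ->
  vec y = (sy * (Mv zy).1, sy * (Mv zy).2) ->
  Dx r1 x * Dx r2 y * Dx r1 y * Dx r2 x = zx.2 * det w zy * zy.2 * det w zx.
Proof.
move=> h1 h2 hx hy v1 v2 vx vy.
rewrite (DxM _ _ _ _ _ _ v1 vx) (DxM _ _ _ _ _ _ v2 vy) (DxM _ _ _ _ _ _ v1 vy) (DxM _ _ _ _ _ _ v2 vx).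
set D := a * d - b * c.
have -> : det (1, 0) zx = zx.2 by rewrite /det /=; ring.
have -> : det (1, 0) zy = zy.2 by rewrite /det /=; ring.
have -> : s1 * sx * D * zx.2 * (s2 * sy * D * det w zy) * (s1 * sy * D * zy.2) *
  (s2 * sx * D * det w zx) = (s1 * s1) * (s2 * s2) * (sx * sx) * (sy * sy) * (D * D) * (D * D)
  * (zx.2 * det w zy * zy.2 * det w zx) by ring.
by rewrite (sq1 _ h1) (sq1 _ h2) (sq1 _ hx) (sq1 _ hy) /D dd1 !mul1r.
Qed.

End M.

Lemma normA (Q P : int) u v : 0 < P -> 1 <= u.2 -> 1 <= v.2 ->
  (det u v = 1 \/ det u v = -1) -> det (Q, P) u * det (Q, P) v < 0 ->
  Npred (Q, P) (u, v) \/ Npred (Q, P) (v, u).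
Proof.
case: u => u1 u2; case: v => v1 v2; rewrite /Npred /det /= => hP hu hv hd hprod.
have iden : P * (u1 * v2 - u2 * v1) = u2 * (Q * v2 - P * v1) - v2 * (Q * u2 - P * u1) by ring.
case: (ltrgt0P (Q * u2 - P * u1)) => hA.
- have hB : Q * v2 - P * v1 < 0 by move: hprod; rewrite pmulr_rlt0.
  have h1 : P * (u1 * v2 - u2 * v1) < 0 by rewrite iden; nia.
  have h2 : u1 * v2 - u2 * v1 < 0 by move: h1; rewrite pmulr_rlt0.
  left; apply/and5P; split => //; try lia; apply/eqP; lia.
- have hB : 0 < Q * v2 - P * v1 by move: hprod; rewrite nmulr_rlt0.
  have h1 : 0 < P * (u1 * v2 - u2 * v1) by rewrite iden; nia.
  have h2 : 0 < u1 * v2 - u2 * v1 by move: h1; rewrite pmulr_rgt0.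
  right; apply/and5P; split => //; try lia; apply/eqP; nia.
- by move: hprod; rewrite hA mul0r ltxx.
Qed.

Lemma sgn_split (x y A B : int) : x * B * y * A < 0 ->
  (0 < x * y -> A * B < 0) /\ (x * y < 0 -> 0 < A * B).
Proof.
have -> : x * B * y * A = (x * y) * (A * B) by ring.
by move=> H; split => h; move: H; [rewrite pmulr_rlt0 | rewrite nmulr_rlt0].
Qed.

Lemma normN (Q P : int) z z' : 0 < P -> (det z z' = 1 \/ det z z' = -1) ->
  z.2 * det (Q, P) z' * z'.2 * det (Q, P) z < 0 ->
  exists u v, Npred (Q, P) (u, v) /\
    (((u = z \/ u = negv z) /\ (v = z' \/ v = negv z')) \/
     ((u = z' \/ u = negv z') /\ (v = z \/ v = negv z))).
Proof.
move=> hP hd hprod.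
have B : forall u0 v0, 1 <= u0.2 -> 1 <= v0.2 ->
    (det u0 v0 = 1 \/ det u0 v0 = -1) -> det (Q, P) u0 * det (Q, P) v0 < 0 ->
    (u0 = z \/ u0 = negv z) -> (v0 = z' \/ v0 = negv z') ->
    exists u v, Npred (Q, P) (u, v) /\
    (((u = z \/ u = negv z) /\ (v = z' \/ v = negv z')) \/
     ((u = z' \/ u = negv z') /\ (v = z \/ v = negv z))).
  move=> u0 v0 h1 h2 h3 h4 h5 h6.
  case: (normA _ _ _ _ hP h1 h2 h3 h4) => hN.
  + by exists u0, v0; split => //; left.
  + by exists v0, u0; split => //; right.
have [S1 S2] := sgn_split _ _ _ _ hprod.
have hz : z.2 != 0 by apply/eqP => e; move: hprod; rewrite e !mul0r ltxx.
have hz' : z'.2 != 0 by apply/eqP => e; move: hprod; rewrite e mulr0 !mul0r ltxx.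
have dN1 : det z (negv z') = 1 \/ det z (negv z') = -1.
  by rewrite det_negvr; case: hd => ->; [right|left]; rewrite ?opprK.
have dN2 : det (negv z) z' = 1 \/ det (negv z) z' = -1.
  by rewrite det_negvl; case: hd => ->; [right|left]; rewrite ?opprK.
have dN3 : det (negv z) (negv z') = 1 \/ det (negv z) (negv z') = -1.
  by rewrite det_negvl det_negvr opprK.
have a1 : z = z \/ z = negv z by left.
have a2 : negv z = z \/ negv z = negv z by right.
have a3 : z' = z' \/ z' = negv z' by left.
have a4 : negv z' = z' \/ negv z' = negv z' by right.
case: (ltrgt0P z.2) => h1; last by move: hz; rewrite h1 eqxx.
- case: (ltrgt0P z'.2) => h2; last by move: hz'; rewrite h2 eqxx.
  + have p : det (Q, P) z * det (Q, P) z' < 0 by apply: S1; exact: mulr_gt0.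
    exact: (B z z' h1 h2 hd p a1 a3).
  + have p : det (Q, P) z * det (Q, P) (negv z') < 0.
      rewrite det_negvr mulrN oppr_lt0; apply: S2; nia.
    have h2' : 1 <= (negv z').2 by rewrite /=; lia.
    exact: (B z (negv z') h1 h2' dN1 p a1 a4).
- case: (ltrgt0P z'.2) => h2; last by move: hz'; rewrite h2 eqxx.
  + have p : det (Q, P) (negv z) * det (Q, P) z' < 0.
      rewrite det_negvr mulNr oppr_lt0; apply: S2; nia.
    have h1' : 1 <= (negv z).2 by rewrite /=; lia.
    exact: (B (negv z) z' h1' h2 dN2 p a2 a3).
  + have p : det (Q, P) (negv z) * det (Q, P) (negv z') < 0.
      rewrite !det_negvr mulrNN; apply: S1; nia.
    have h1' : 1 <= (negv z).2 by rewrite /=; lia.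
    have h2' : 1 <= (negv z').2 by rewrite /=; lia.
    exact: (B (negv z) (negv z') h1' h2' dN3 p a2 a4).
Qed.

Definition psi a b c d (e : (int * int) * (int * int)) : extQ * extQ :=
  let x := slp (Mv a b c d e.1) in let y := slp (Mv a b c d e.2) in
  if ext_lt x y then (x, y) else (y, x).

Section Main.
Variables (a b c d : int).
Hypothesis hdelta : a * d - b * c = 1 \/ a * d - b * c = -1.
Variables (Q P : int) (r1 r2 : extQ) (s1 s2 : int).
Hypothesis hP : 0 < P.
Hypothesis hs1 : s1 = 1 \/ s1 = -1.
Hypothesis hs2 : s2 = 1 \/ s2 = -1.
Hypothesis v1 : vec r1 = (s1 * (Mv a b c d (1, 0)).1, s1 * (Mv a b c d (1, 0)).2).
Hypothesis v2 : vec r2 = (s2 * (Mv a b c d (Q, P)).1, s2 * (Mv a b c d (Q, P)).2).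

Lemma slpM_inj (z z' : int * int) : 1 <= z.2 -> 1 <= z'.2 -> prim (Mv a b c d z) -> prim (Mv a b c d z') ->
  slp (Mv a b c d z) = slp (Mv a b c d z') -> z = z'.
Proof.
move=> h1 h2 /(vec_slp_s _) [s [hs vs]] /(vec_slp_s _) [s' [hs' vs']] e.
have := congr1 vec e; rewrite vs vs' => /pair_equal_spec [e1 e2].
case: hs => Es; case: hs' => Es'; rewrite Es Es' in e1 e2.
- have : Mv a b c d z = Mv a b c d z'.
    by rewrite [Mv a b c d z]surjective_pairing [Mv a b c d z']surjective_pairing; congr (_, _); lia.
  by move=> /(congr1 (Minv a b c d)); rewrite !MinvM.
- have : Mv a b c d z = Mv a b c d (negv z').
    rewrite Mv_negv /negv.
    by rewrite [Mv a b c d z]surjective_pairing; congr (_, _); lia.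
  move=> /(congr1 (Minv a b c d)); rewrite !MinvM // => Ez; exfalso; move: h1; rewrite Ez /=; lia.
- have : Mv a b c d z = Mv a b c d (negv z').
    rewrite Mv_negv /negv.
    by rewrite [Mv a b c d z]surjective_pairing; congr (_, _); lia.
  move=> /(congr1 (Minv a b c d)); rewrite !MinvM // => Ez; exfalso; move: h1; rewrite Ez /=; lia.
- have : Mv a b c d z = Mv a b c d z'.
    by rewrite [Mv a b c d z]surjective_pairing [Mv a b c d z']surjective_pairing; congr (_, _); lia.
  by move=> /(congr1 (Minv a b c d)); rewrite !MinvM.
Qed.

Lemma Npred_facts u v : Npred (Q, P) (u, v) ->
  [/\ 1 <= u.2, 1 <= v.2, det u v = -1, det (Q, P) v < 0 & 0 < det (Q, P) u].
Proof.
move=> /and5P [h1 h2 /eqP h3 h4 h5]; split => //.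
by move: h4; rewrite /det /=; lia.
Qed.

Lemma Npred_prim u v : Npred (Q, P) (u, v) ->
  prim (Mv a b c d u) /\ prim (Mv a b c d v).
Proof.
move=> /Npred_facts [_ _ hd _ _]; split.
- by apply: (prim_M _ _ _ _ hdelta u v); right.
- apply: (prim_M _ _ _ _ hdelta v u); left.
  by move: hd; rewrite /det; lia.
Qed.

Lemma psi_cross e : Npred (Q, P) e -> crosses r1 r2 (psi a b c d e).
Proof.
case: e => u v hN.
have [hu hv hd hwv hwu] := Npred_facts _ _ hN.
have [pu pv] := Npred_prim _ _ hN.
have [sx [hsx vx]] := vec_slp_s _ pu.
have [sy [hsy vy]] := vec_slp_s _ pv.
rewrite /psi /=.
set x := slp (Mv a b c d u) in vx *; set y := slp (Mv a b c d v) in vy *.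
have Dxy : Dx x y = 1 \/ Dx x y = -1.
  rewrite (DxM _ _ _ _ _ _ _ _ _ _ vx vy) hd.
  by case: hsx => ->; case: hsy => ->; case: hdelta => ->; lia.
have pr1 := prod4 _ _ _ _ hdelta _ _ _ _ _ _ _ _ _ _ _ hs1 hs2 hsx hsy v1 v2 vx vy.
have pr2 := prod4 _ _ _ _ hdelta _ _ _ _ _ _ _ _ _ _ _ hs1 hs2 hsy hsx v1 v2 vy vx.
have neg1 : u.2 * det (Q, P) v * v.2 * det (Q, P) u < 0.
  have -> : u.2 * det (Q, P) v * v.2 * det (Q, P) u = (u.2 * v.2 * det (Q, P) u) * det (Q, P) v by ring.
  rewrite pmulr_rlt0 // !mulr_gt0 //; lia.
have neg2 : v.2 * det (Q, P) u * u.2 * det (Q, P) v < 0.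
  by have -> : v.2 * det (Q, P) u * u.2 * det (Q, P) v = u.2 * det (Q, P) v * v.2 * det (Q, P) u by ring.
case: ifP => hlt.
- rewrite crossesE pr1 neg1 andbT.
  move: hlt; rewrite ext_lt_D; case: Dxy => -> //.
- have hyx : ext_lt y x.
    case: (ext_trich x y) => [h|e|//]; first by rewrite h in hlt.
    by move: Dxy; rewrite e Dxx; lia.
  rewrite crossesE pr2 neg2 andbT.
  move: hyx; rewrite ext_lt_D DxC; case: Dxy => -> //.
Qed.

Lemma cross_psi x y : crosses r1 r2 (x, y) ->
  exists e, Npred (Q, P) e /\ psi a b c d e = (x, y).
Proof.
rewrite crossesE => /andP [/eqP hxy hpr].
set z := Minv a b c d (vec x); set z' := Minv a b c d (vec y).
have vx : vec x = (1 * (Mv a b c d z).1, 1 * (Mv a b c d z).2).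
  by rewrite /z MMinv // !mul1r; case: (vec x).
have vy : vec y = (1 * (Mv a b c d z').1, 1 * (Mv a b c d z').2).
  by rewrite /z' MMinv // !mul1r; case: (vec y).
have o1 : (1 : int) = 1 \/ (1 : int) = -1 by left.
rewrite (prod4 _ _ _ _ hdelta _ _ _ _ _ _ _ _ _ _ _ hs1 hs2 o1 o1 v1 v2 vx vy) in hpr.
have hd : det z z' = 1 \/ det z z' = -1.
  move: hxy; rewrite (DxM _ _ _ _ _ _ _ _ _ _ vx vy) !mul1r.
  by case: hdelta => ->; lia.
have [u [v [hN hor]]] := normN _ _ _ _ hP hd hpr.
exists (u, v); split => //.
have sz : forall t, t = z \/ t = negv z -> slp (Mv a b c d t) = x.
  move=> t [] ->; rewrite ?Mv_negv ?slpN /z MMinv // slope_vec //.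
have sz' : forall t, t = z' \/ t = negv z' -> slp (Mv a b c d t) = y.
  move=> t [] ->; rewrite ?Mv_negv ?slpN /z' MMinv // slope_vec //.
have lxy : ext_lt x y by rewrite ext_lt_D hxy.
have nyx : ext_lt y x = false by rewrite ext_lt_D DxC hxy.
rewrite /psi /=.
case: hor => [[hu hv] | [hu hv]].
- by rewrite (sz _ hu) (sz' _ hv) lxy.
- by rewrite (sz' _ hu) (sz _ hv) nyx.
Qed.

Lemma psi_inj e1 e2 : Npred (Q, P) e1 -> Npred (Q, P) e2 ->
  psi a b c d e1 = psi a b c d e2 -> e1 = e2.
Proof.
case: e1 => u1 w1; case: e2 => u2 w2 N1 N2.
have [hu1 hw1 hd1 _ _] := Npred_facts _ _ N1.
have [hu2 hw2 hd2 _ _] := Npred_facts _ _ N2.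
have [pu1 pw1] := Npred_prim _ _ N1.
have [pu2 pw2] := Npred_prim _ _ N2.
have swap : u1 = w2 -> w1 = u2 -> False.
  move=> e e'; move: hd1; rewrite e e'; move: hd2; rewrite /det; lia.
rewrite /psi /=; case: ifP => _; case: ifP => _; case => ea eb.
- by rewrite (slpM_inj _ _ hu1 hu2 pu1 pu2 ea) (slpM_inj _ _ hw1 hw2 pw1 pw2 eb).
- by case: (swap (slpM_inj _ _ hu1 hw2 pu1 pw2 ea) (slpM_inj _ _ hw1 hu2 pw1 pu2 eb)).
- by case: (swap (slpM_inj _ _ hu1 hw2 pu1 pw2 eb) (slpM_inj _ _ hw1 hu2 pw1 pu2 ea)).
- by rewrite (slpM_inj _ _ hu1 hu2 pu1 pu2 eb) (slpM_inj _ _ hw1 hw2 pw1 pw2 ea).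
Qed.

End Main.

Theorem theorem17 (p q : nat) (a b c d : int) :
  (0 < q)%N -> (q < p)%N -> coprime p q ->
  (a * d - b * c = 1 \/ a * d - b * c = -1) ->
  dc_eq (slope a b) (slope (q%:Z * a + p%:Z * c) (q%:Z * b + p%:Z * d))
        (E p q - 1).
Proof.
move=> hq hqp hcop hdelta.
have r1E : slope a b = slp (a, b) by [].
have r2E : slope (q%:Z * a + p%:Z * c) (q%:Z * b + p%:Z * d) = slp (Mv a b c d (q%:Z, p%:Z)) by [].
rewrite r1E r2E.
set r1 := slp (a, b); set r2 := slp (Mv a b c d (q%:Z, p%:Z)).
have [s1 [hs1 vs1]] : exists s, (s = 1 \/ s = -1) /\ vec r1 = (s * a, s * b).
  by apply: (vec_slp_s (a, b)); exists (c, d).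
have v1 : vec r1 = (s1 * (Mv a b c d (1, 0)).1, s1 * (Mv a b c d (1, 0)).2).
  by rewrite vs1 /Mv /=; congr (_, _); congr (_ * _); ring.
have [t0 ht0] : exists t0, det (q%:Z, p%:Z) t0 = 1.
  have : coprimez q%:Z p%:Z by rewrite coprimezE /= coprime_sym.
  move=> /coprimezP [[u v] /= huv].
  by exists (- v, u); rewrite /det /=; rewrite -huv; ring.
have [s2 [hs2 v2]] := vec_slp_s _ (prim_M _ _ _ _ hdelta _ _ (or_introl ht0)).
have hP : (0 : int) < p%:Z by lia.
have hQ : (0 : int) < q%:Z by lia.
have hQP : q%:Z < p%:Z by lia.
set L := Lst (p + q) p q.
have [t Lc] : exists t, L = root :: t.
  rewrite /L; case Epq: (p + q)%N => [|f]; first by lia.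
  rewrite /=; have -> : (p == 0%N) = false by lia.
  by rewrite ifT; [eexists | lia].
have uL : uniq L by apply: uniq_Lst; lia.
have memb : forall e, (e \in t) = Npred (q%:Z, p%:Z) e.
  move=> e; rewrite (mem_behead_uniq _ root t e) -?Lc // /L mem_Lst //.
  by rewrite NpredE.
exists (map (psi a b c d) t); split.
- rewrite map_inj_in_uniq; first by move: uL; rewrite Lc => /andP [].
  move=> e1 e2; rewrite !memb => N1 N2.
  exact: (psi_inj _ _ _ _ hdelta _ _ _ _ hP hs1 hs2 _ _ N1 N2).
- case=> x y; apply/idP/idP.
  + move=> /(cross_psi _ _ _ _ hdelta _ _ _ _ _ _ hP hs1 hs2 v1 v2) [e [hN <-]].
    by apply: map_f; rewrite memb.
  + move=> /mapP [e he ->].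
    by apply: (psi_cross _ _ _ _ hdelta _ _ _ _ _ _ hP hs1 hs2 v1 v2); rewrite -memb.
- rewrite size_map.
  have : size L = E p q by rewrite /L size_Lst.
  by rewrite Lc /= => <-; rewrite subn1.
Qed.
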